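(* There is a constant $K$ such that the following holds. Let $d\in\mathbb{N}$ and $0\le r\le s\le N$ with $s-r\ge d$. Let $\mathcal{L}$ be the event that $pr$ is a renewal point and the restriction of the partition to $\{0,\ldots,pr-1\}$ coincides with some given partition of this set. Let $\mathcal{R}$ be the event that $ps$ is a renewal point and the restriction of the partition to $\{ps,\ldots,pN-1\}$ coincides with some given partition of this set. Then $$\bigl|\mathbb{P}_N(\mathcal{L}\cap\mathcal{R})-\mathbb{P}_N(\mathcal{L})\mathbb{P}_N(\mathcal{R})\bigr|\le K\,\mathbb{P}_N(\mathcal{L})\,\mathbb{P}_N(\mathcal{R})\sup_{k\ge d}|u_k-\mu^{-1}| .$$
   Context: Setting. Let $R,\ell>0$, $p\in\mathbb{N}$ and $\gamma=\ell/R$. $\mathcal{Z}=\mathbb{R}\times[0,2\pi R]$. Laughlin's function. $$\Psi_N=\kappa_N\prod_{j<k}\bigl(e^{z_k/R}-e^{z_j/R}\bigr)^p e^{-\sum x_k^2/(2\ell^2)},$$ with $$\kappa_N=(N!)^{-1/2}(2\pi R\ell\sqrt\pi)^{-N/2}\exp\Bigl(-\tfrac12p^2\gamma^2\sum_{j=1}^N(j-1)^2\Bigr),$$ and $C_N=\|\Psi_N\|^2_{L^2(\mathcal{Z}^N)}$. Orbitals and coefficients. $\psi_k(z)\propto e^{kz/R}e^{-x^2/(2\ell^2)}$ are orthonormal, and $$\Psi_N=(N!)^{-1/2}\sum_{\mathbf m}a_N(\mathbf m)\prod_i\psi_{m_i}(z_i).$$ Renewal points of tuples. A number $pk$ with $0\le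 k\le N$ is a renewal point of $\mathbf m$ if the $k$ smallest entries sum to $pk(k-1)/2$. Renewal weights. $\alpha_n=\frac1{n!}\sum|a_n(\mathbf m)|^2$, summed over $\mathbf m\in\{0,\ldots,pn-p\}^n$ whose only renewal points are $0$ and $pn$. $r=\exp(-\lim_N\frac1N\ln C_N)$, $p_n=\alpha_nr^n$, and $u_N=C_Nr^N$. It is known that: - $u_N=\sum_{n_1+\cdots+n_D=N}p_{n_1}\cdots p_{n_D}$; - $\sum p_n=1$; - $\mu=\sum np_n<\infty$; - $u_N\to\mu^{-1}$. Partitions. $\mathcal{P}_N$ is the set of partitions of $\{0,\ldots,pN-1\}$ into rods $\{pj,\ldots,pj+pn-1\}$ with $n\ge1$. Its renewal points are the left endpoints of the rods together with $pN$. The probability $\mathbb{P}_N$ of a partition with rod lengths $pn_1,\ldots,pn_D$ is $p_{n_1}\cdots p_{n_D}/u_N$. *)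

(* Defs.v *)
From HB Require Import structures.
From mathcomp Require Import all_boot all_order all_algebra.
From mathcomp Require mpoly.

Module LaughlinPoly.
Import mpoly.
Local Open Scope ring_scope.
Definition laughlin_poly (p N : nat) : {mpoly int[N]} :=
  \prod_(k < N) \prod_(j < N | (j < k)%N) ('X_k - 'X_j) ^+ p.
Definition lcoef (p N : nat) (m : N.-tuple nat) : int :=
  (laughlin_poly p N)@_[multinom m].
End LaughlinPoly.

From mathcomp Require Import all_classical all_reals all_analysis.
Set Implicit Arguments. Unset Strict Implicit. Unset Printing Implicit Defensive.
Import Order.TTheory GRing.Theory Num.Theory.
Import numFieldNormedType.Exports.
Local Open Scope ring_scope.

Section Laughlin.
Variables (R : realType) (p : nat) (gam : R).

(* a_N(m): coefficient of  prod_i psi_{m_i}(z_i)  in  sqrt(N!) Psi_N.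
   With psi_k = c_k e^{kz/R} e^{-x^2/(2 l^2)},
   c_k = (2 pi R l sqrt pi)^{-1/2} exp(-k^2 gam^2/2), one gets
   a_N(m) = coef_m * exp(gam^2/2 * (sum_i m_i^2 - p^2 sum_{j=1}^N (j-1)^2)). *)
Definition aN (N : nat) (m : N.-tuple nat) : R :=
  (LaughlinPoly.lcoef p N m)%:~R *
  expR (gam ^+ 2 / 2 *
        ((\sum_(i < N) (tnth m i) ^ 2)%:R - (p ^ 2 * \sum_(j < N) j ^ 2)%:R)).

(* C_N = ||Psi_N||^2 = (1/N!) sum_m |a_N(m)|^2 (orthonormality of the
   product orbitals); all nonzero coefficients have m_i <= p(N-1). *)
Definition CN (N : nat) : R :=
  (N`!%:R)^-1 * \sum_(m : N.-tuple 'I_(p * (N - 1)).+1) aN (map_tuple val m) ^+ 2.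

(* pk is a renewal point of m : the k smallest entries sum to p k (k-1)/2 *)
Definition renewal_pt (m : seq nat) (k : nat) : bool :=
  sumn (take k (sort leq m)) == p * 'C(k, 2).

Definition alpha (n : nat) : R :=
  (n`!%:R)^-1 *
  \sum_(m : n.-tuple 'I_(p * n - p).+1 |
         [forall k : 'I_n.+1,
            renewal_pt (map val m) k == ((k == 0%N :> nat) || (k == n :> nat))])
     aN (map_tuple val m) ^+ 2.

Definition rr : R := expR (- limn (fun N : nat => (N%:R)^-1 * ln (CN N))).
Definition pp (n : nat) : R := alpha n * rr ^+ n.
Definition uu (N : nat) : R := CN N * rr ^+ N.
Definition mu : R := limn (fun M : nat => \sum_(1 <= n < M) n%:R * pp n).

End Laughlin.

Definition is_comp (N : nat) (ns : seq nat) : bool :=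
  all (fun n => 0 < n)%N ns && (sumn ns == N).

Fixpoint comps_fuel (f N : nat) : seq (seq nat) :=
  match f with
  | 0 => if N == 0%N then [:: [::]] else [::]
  | f'.+1 =>
      if N == 0%N then [:: [::]]
      else flatten [seq [seq n :: c | c <- comps_fuel f' (N - n)] | n <- iota 1 N]
  end.
Definition comps (N : nat) : seq (seq nat) := comps_fuel N N.

(* rods {pj, ..., pj+pn-1} of a partition given by its rod lengths
   (in units of p), starting at p*j *)
Fixpoint rods_from (p j : nat) (ns : seq nat) : seq (seq nat) :=
  match ns with
  | [::] => [::]
  | n :: ns' => iota (p * j) (p * n) :: rods_from p (j + n) ns'
  end.
Definition rods (p : nat) (ns : seq nat) := rods_from p 0 ns.

Definition renewal_points (p N : nat) (ns : seq nat) : seq nat :=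
  rcons [seq head 0%N rd | rd <- rods p ns] (p * N).

Definition eventL (p N r : nat) (lc : seq nat) (ns : seq nat) : bool :=
  (p * r \in renewal_points p N ns) &&
  ([seq rd <- rods p ns | all (fun x => x < p * r)%N rd] == rods p lc).

Definition eventR (p N s : nat) (rc : seq nat) (ns : seq nat) : bool :=
  (p * s \in renewal_points p N ns) &&
  ([seq rd <- rods p ns | all (fun x => p * s <= x)%N rd] == rods_from p s rc).

Definition PN (R : realType) (p : nat) (gam : R) (N : nat) (E : pred (seq nat)) : R :=
  \sum_(ns <- comps N | E ns) (\prod_(n <- ns) pp p gam n) / uu p gam N.

(* Main.v *)
Require Import Defs.
From HB Require Import structures.
From mathcomp Require Import all_boot all_order all_algebra.
From mathcomp Require Import all_classical all_reals all_analysis.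
From mathcomp Require Import zify ring lra.
From mathcomp Require mpoly.
Import Order.TTheory GRing.Theory Num.Theory.
Import numFieldNormedType.Exports.
Local Open Scope classical_set_scope.
Local Open Scope ring_scope.

Lemma lcoef1 p (t : 1.-tuple nat) : tnth t ord0 = 0%N -> LaughlinPoly.lcoef p 1 t = 1.
Proof.
move=> H0.
rewrite /LaughlinPoly.lcoef /LaughlinPoly.laughlin_poly big_ord1.
rewrite big_pred0; last by case.
have -> : mpoly.Multinom t = mpoly.mnm0.
  apply/mpoly.mnmP => i; rewrite ord1 mpoly.mnm0E.
  exact: H0.
by rewrite mpoly.mcoeff1 eqxx.
Qed.

Section Pos.
Variables (R : realType) (p : nat) (gam : R).

Lemma alpha_ge0 n : 0 <= alpha p gam n.
Proof.
rewrite /alpha mulr_ge0 // ?invr_ge0 ?ler0n //.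
by apply: sumr_ge0 => i _; exact: sqr_ge0.
Qed.

Lemma rr_gt0 : 0 < rr p gam.
Proof. exact: expR_gt0. Qed.

Lemma pp_ge0 n : 0 <= pp p gam n.
Proof. by rewrite /pp mulr_ge0 ?alpha_ge0 // exprn_ge0 // ltW // rr_gt0. Qed.

Lemma alpha1_gt0 : 0 < alpha p gam 1.
Proof.
rewrite /alpha /= invr1 mul1r.
set m0 : 1.-tuple 'I_(p * 1 - p).+1 := [tuple ord0].
have Hc : [forall k : 'I_2, renewal_pt p (map val m0) k == ((k == 0%N :> nat) || (k == 1%N :> nat))].
  apply/forallP => -[[|[|k]] Hk] //=; by rewrite /renewal_pt /= bin_small // mulr0.
rewrite (bigD1 m0) //=.
have h1 : 0 < aN p gam (map_tuple val m0) ^+ 2.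
  rewrite exprn_gt0 // /aN lcoef1; last by rewrite tnth_map.
  by rewrite mul1r expR_gt0.
apply: (lt_le_trans h1); rewrite lerDl.
by apply: sumr_ge0 => i _; exact: sqr_ge0.
Qed.

Lemma pp1_gt0 : 0 < pp p gam 1.
Proof. by rewrite /pp expr1 mulr_gt0 ?alpha1_gt0 ?rr_gt0. Qed.

End Pos.

Section Comb.
Local Open Scope nat_scope.

Lemma is_comp0 ns : is_comp 0 ns = (ns == [::]).
Proof.
case: ns => [//|x ns] /=; rewrite /is_comp /=.
case: x => [//|x] /=; by rewrite andbF.
Qed.

Lemma comps_fuelP f N ns : N <= f -> (ns \in comps_fuel f N) = is_comp N ns.
Proof.
elim: f N ns => [|f IH] N ns.
  by rewrite leqn0 => /eqP -> /=; rewrite inE is_comp0.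
move=> HN /=; case: eqP => [->|/eqP N0]; first by rewrite inE is_comp0.
apply/idP/idP.
  move/allpairsPdep => [n [c [Hn Hc ->]]].
  rewrite mem_iota in Hn; case/andP: Hn => Hn1 Hn2.
  rewrite IH in Hc; last by lia.
  case/andP: Hc => Hc1 /eqP Hc2.
  by rewrite /is_comp /= Hn1 Hc1 Hc2 /=; apply/eqP; lia.
case: ns => [|x c]; first by rewrite /is_comp /= eq_sym (negbTE N0).
rewrite /is_comp /= => /andP [/andP [Hx Hc] /eqP Hs].
apply/allpairsPdep; exists x, c; split => //.
  rewrite mem_iota; apply/andP; split => //; lia.
rewrite IH; last by lia.
by rewrite /is_comp Hc /=; apply/eqP; lia.
Qed.

Lemma compsP N ns : (ns \in comps N) = is_comp N ns.
Proof. exact: comps_fuelP. Qed.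

Lemma comps_fuel_uniq f N : uniq (comps_fuel f N).
Proof.
elim: f N => [|f IH] N /=; first by case: eqP.
case: eqP => // _.
apply: allpairs_uniq_dep; first exact: iota_uniq.
  by move=> *; exact: IH.
by move=> [n c] [n' c'] _ _ /= [-> ->].
Qed.

Lemma comps_uniq N : uniq (comps N).
Proof. exact: comps_fuel_uniq. Qed.


Variable p : nat.
Hypothesis p0 : 0 < p.

Lemma rods_from_cat j a b :
  rods_from p j (a ++ b) = rods_from p j a ++ rods_from p (j + sumn a) b.
Proof.
elim: a j => [|x a IH] j /=; first by rewrite addn0.
by rewrite IH addnA.
Qed.

Lemma rods_from_inj j a b : rods_from p j a = rods_from p j b -> a = b.
Proof.
elim: a j b => [|x a IH] j [|y b] //= [H1 H2].
have Hxy : x = y.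
  have := congr1 size H1; rewrite !size_iota => /eqP.
  by rewrite eqn_pmul2l // => /eqP.
subst y; congr (_ :: _); apply: (IH (j + x)); exact: H2.
Qed.

Definition PL r (rd : seq nat) := all (fun x => x < p * r) rd.
Definition PR s (rd : seq nat) := all (fun x => p * s <= x) rd.

Lemma all_PL r j a : j + sumn a <= r -> all (PL r) (rods_from p j a).
Proof.
elim: a j => [|x a IH] j //= H; apply/andP; split.
  apply/allP => y; rewrite mem_iota => /andP [_ Hy].
  apply: (leq_trans Hy); rewrite -mulnDr leq_pmul2l //; lia.
by apply: IH; lia.
Qed.

Lemma nhas_PL r j b : r <= j -> all (fun n => 0 < n) b -> ~~ has (PL r) (rods_from p j b).
Proof.
elim: b j => [|x b IH] j //= Hj /andP [Hx Hb]; rewrite negb_or; apply/andP; split.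
  apply/negP => /allP /(_ (p * j)); rewrite mem_iota leqnn /= -{1}(addn0 (p*j)) ltn_add2l muln_gt0 p0 Hx.
  by move=> /(_ isT); rewrite ltn_pmul2l //; lia.
by apply: IH => //; lia.
Qed.

Lemma nhas_PR s j a : j + sumn a <= s -> all (fun n => 0 < n) a -> ~~ has (PR s) (rods_from p j a).
Proof.
elim: a j => [|x a IH] j //= Hj /andP [Hx Ha]; rewrite negb_or; apply/andP; split.
  apply/negP => /allP /(_ (p * j)); rewrite mem_iota leqnn /= -{1}(addn0 (p*j)) ltn_add2l muln_gt0 p0 Hx.
  by move=> /(_ isT); rewrite leq_pmul2l //; lia.
by apply: IH => //; lia.
Qed.

Lemma all_PR s j b : s <= j -> all (PR s) (rods_from p j b).
Proof.
elim: b j => [|x b IH] j //= H; apply/andP; split.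
  apply/allP => y; rewrite mem_iota => /andP [Hy _].
  apply: leq_trans Hy; rewrite leq_pmul2l //.
by apply: IH; lia.
Qed.

Lemma filter_PL a b : all (fun n => 0 < n) b ->
  [seq rd <- rods p (a ++ b) | PL (sumn a) rd] = rods p a.
Proof.
move=> Hb; rewrite /rods rods_from_cat filter_cat.
rewrite (all_filterP (@all_PL (sumn a) 0 a (leqnn _))).
have := @nhas_PL (sumn a) (0 + sumn a) b (leqnn _) Hb.
rewrite has_filter negbK => /eqP ->; by rewrite cats0.
Qed.

Lemma filter_PR a b : all (fun n => 0 < n) a ->
  [seq rd <- rods p (a ++ b) | PR (sumn a) rd] = rods_from p (sumn a) b.
Proof.
move=> Ha; rewrite /rods rods_from_cat filter_cat.
have := @nhas_PR (sumn a) 0 a (leqnn _) Ha.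
rewrite has_filter negbK => /eqP ->.
by rewrite (all_filterP (@all_PR (sumn a) (0 + sumn a) b (leqnn _))).
Qed.

Lemma heads_mem j ns k : all (fun n => 0 < n) ns ->
  p * (j + sumn (take k ns)) \in rcons [seq head 0 rd | rd <- rods_from p j ns] (p * (j + sumn ns)).
Proof.
elim: ns j k => [|x ns IH] j k /=; first by case: k => [|k] /=; rewrite inE.
move=> /andP [Hx Hns]; case: k => [|k] /=.
  rewrite addn0 inE; apply/orP; left.
  case: (p * x) (muln_gt0 p x) => [|n]; first by rewrite p0 Hx.
  by [].
rewrite inE; apply/orP; right.
by rewrite !addnA; apply: IH.
Qed.

Lemma heads_inv j ns y :
  y \in [seq head 0 rd | rd <- rods_from p j ns] -> all (fun n => 0 < n) ns ->
  exists k, y = p * (j + sumn (take k ns)).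
Proof.
elim: ns j => [|x ns IH] j //=.
rewrite inE => /orP [/eqP ->|Hy] /andP [Hx Hns].
  exists 0; rewrite /= addn0.
  by case: (p * x) (muln_gt0 p x) => [|n]; first by rewrite p0 Hx.
have [k ->] := IH _ Hy Hns; exists k.+1 => /=; by rewrite addnA.
Qed.

Lemma renewal_inv N ns r : is_comp N ns -> p * r \in renewal_points p N ns ->
  exists k, r = sumn (take k ns).
Proof.
move=> /andP [Hpos /eqP HN]; rewrite /renewal_points mem_rcons inE => /orP [/eqP H|H].
  exists (size ns); rewrite take_size HN; apply/eqP; by rewrite -(eqn_pmul2l p0) H.
have [k Hk] := @heads_inv 0 ns _ H Hpos; exists k; apply/eqP; by rewrite -(eqn_pmul2l p0) Hk.
Qed.

Lemma renewal_mem N a b : is_comp N (a ++ b) -> p * sumn a \in renewal_points p N (a ++ b).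
Proof.
move=> /andP [Hpos /eqP HN]; rewrite /renewal_points /rods.
have := @heads_mem 0 (a ++ b) (size a) Hpos.
by rewrite take_size_cat // HN.
Qed.

Lemma pos_cat a b : all (fun n => 0 < n) (a ++ b) ->
  all (fun n => 0 < n) a /\ all (fun n => 0 < n) b.
Proof. by rewrite all_cat => /andP. Qed.

Lemma eventL_cat N r lc x : is_comp N (lc ++ x) -> sumn lc = r ->
  eventL p N r lc (lc ++ x).
Proof.
move=> Hc Hr; subst r; rewrite /eventL renewal_mem //=.
case/andP: Hc => /pos_cat [_ Hx] _.
by rewrite (filter_PL lc x Hx).
Qed.

Lemma eventL_inv N r lc ns : is_comp N ns -> eventL p N r lc ns ->
  exists x, ns = lc ++ x.
Proof.
move=> Hc /andP [Hren /eqP Hf].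
have [k Hk] := @renewal_inv N ns _ Hc Hren; subst r.
have Hpos := Hc; case/andP: Hpos; rewrite -(cat_take_drop k ns) => /pos_cat [_ Hd] _.
move: Hf; rewrite -[in rods p ns](cat_take_drop k ns) (filter_PL _ _ Hd) /rods => /rods_from_inj Ht.
by exists (drop k ns); rewrite -Ht cat_take_drop.
Qed.

Lemma eventR_cat N s rc y : is_comp N (y ++ rc) -> sumn y = s ->
  eventR p N s rc (y ++ rc).
Proof.
move=> Hc Hs; subst s; rewrite /eventR renewal_mem //=.
case/andP: Hc => /pos_cat [Hy _] _.
by rewrite (filter_PR y rc Hy).
Qed.

Lemma eventR_inv N s rc ns : is_comp N ns -> eventR p N s rc ns ->
  exists y, ns = y ++ rc /\ sumn y = s.
Proof.
move=> Hc /andP [Hren /eqP Hf].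
have [k Hk] := @renewal_inv N ns _ Hc Hren; subst s.
have Hpos := Hc; case/andP: Hpos; rewrite -(cat_take_drop k ns) => /pos_cat [Ht _] _.
move: Hf; rewrite -[in rods p ns](cat_take_drop k ns) (filter_PR _ _ Ht) => /rods_from_inj Hd.
by exists (take k ns); rewrite -Hd cat_take_drop.
Qed.

Lemma split_prefix (a b a' b' : seq nat) : a ++ b = a' ++ b' ->
  all (fun n => 0 < n) a -> all (fun n => 0 < n) a' -> sumn a <= sumn a' -> exists m, a' = a ++ m.
Proof.
elim: a a' => [|x a IH] a'; first by exists a'.
case: a' => [|x' a'] /=.
  move=> _ /andP [Hx _] _; lia.
move=> [<- H] /andP [_ Hposa] /andP [_ Hpos] Hs.
have Hs' : sumn a <= sumn a' by rewrite leq_add2l in Hs.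
have [m ->] := IH _ H Hposa Hpos Hs'.
by exists m.
Qed.


Lemma catlI (a x y : seq nat) : a ++ x = a ++ y -> x = y.
Proof. by move/eqP; rewrite eqseq_cat // eqxx => /eqP. Qed.

Lemma catrI' (b x y : seq nat) : x ++ b = y ++ b -> x = y.
Proof.
move=> H; have Hs : size x = size y.
  by have := congr1 size H; rewrite !size_cat => /eqP; rewrite eqn_add2r => /eqP.
by move/eqP: H; rewrite eqseq_cat // eqxx andbT => /eqP.
Qed.

Lemma is_comp_cat a b x y : is_comp a x -> is_comp b y -> is_comp (a + b) (x ++ y).
Proof.
rewrite /is_comp all_cat sumn_cat => /andP [H1 /eqP H2] /andP [H3 /eqP H4].
by rewrite H1 H3 H2 H4 eqxx.
Qed.

Lemma is_comp_catl a x y : is_comp a (x ++ y) -> is_comp (a - sumn x) y.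
Proof.
rewrite /is_comp all_cat sumn_cat => /andP [/andP [_ H1] /eqP <-].
by rewrite H1 addKn eqxx.
Qed.

Lemma is_comp_catr a x y : is_comp a (x ++ y) -> is_comp (a - sumn y) x.
Proof.
rewrite /is_comp all_cat sumn_cat => /andP [/andP [H1 _] /eqP <-].
by rewrite H1 addnK eqxx.
Qed.

Lemma memL N r lc ns : r <= N -> is_comp r lc ->
  ((ns \in comps N) && eventL p N r lc ns) = (ns \in [seq lc ++ x | x <- comps (N - r)]).
Proof.
move=> HrN Hlc; have Hs : sumn lc = r by case/andP: Hlc => _ /eqP.
apply/idP/idP.
  move=> /andP [Hc Hev]; rewrite compsP in Hc.
  have [x Hx] := @eventL_inv N r lc ns Hc Hev; subst ns.
  apply/mapP; exists x => //; rewrite compsP -Hs; exact: (@is_comp_catl N lc x Hc).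
move=> /mapP [x Hx ->]; rewrite compsP in Hx.
have Hc : is_comp N (lc ++ x) by rewrite -(subnKC HrN); exact: is_comp_cat.
by rewrite compsP Hc eventL_cat.
Qed.

Lemma memR N s rc ns : s <= N -> is_comp (N - s) rc ->
  ((ns \in comps N) && eventR p N s rc ns) = (ns \in [seq y ++ rc | y <- comps s]).
Proof.
move=> HsN Hrc; have Hs : sumn rc = N - s by case/andP: Hrc => _ /eqP.
apply/idP/idP.
  move=> /andP [Hc Hev]; rewrite compsP in Hc.
  have [y [Hy Hsy]] := @eventR_inv N s rc ns Hc Hev; subst ns.
  apply/mapP; exists y => //; rewrite compsP.
  have := @is_comp_catr N y rc Hc; rewrite Hs; congr is_comp; lia.
move=> /mapP [y Hy ->]; rewrite compsP in Hy.
have Hc : is_comp N (y ++ rc) by rewrite -(subnKC HsN); exact: is_comp_cat.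
rewrite compsP Hc eventR_cat //; by case/andP: Hy => _ /eqP.
Qed.

Lemma memLR N r s lc rc ns : r <= s -> s <= N -> is_comp r lc -> is_comp (N - s) rc ->
  ((ns \in comps N) && (eventL p N r lc ns && eventR p N s rc ns))
  = (ns \in [seq lc ++ (m ++ rc) | m <- comps (s - r)]).
Proof.
move=> Hrs HsN Hlc Hrc.
have Hsl : sumn lc = r by case/andP: Hlc => _ /eqP.
have Hsr : sumn rc = N - s by case/andP: Hrc => _ /eqP.
apply/idP/idP.
  move=> /andP [Hc /andP [HL HR]]; rewrite compsP in Hc.
  have [x Hx] := @eventL_inv N r lc ns Hc HL.
  have [y [Hy Hsy]] := @eventR_inv N s rc ns Hc HR.
  have Hyc : is_comp s y.
    have := @is_comp_catr N y rc (etrans (f_equal (is_comp N) (esym Hy)) Hc); rewrite Hsr; congr is_comp; lia.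
  have [m Hm] : exists m, y = lc ++ m.
    apply: (@split_prefix lc x y rc); first by rewrite -Hx.
      by case/andP: Hlc.
      by case/andP: Hyc.
    by rewrite Hsl Hsy.
  subst y; rewrite Hx -catA in Hy.
  have Hxm := @catlI lc _ _ Hy; subst ns.
  apply/mapP; exists m; last by rewrite Hxm.
  rewrite compsP; have := @is_comp_catl s lc m Hyc; rewrite Hsl //.
move=> /mapP [m Hm ->]; rewrite compsP in Hm.
have Hc : is_comp N (lc ++ (m ++ rc)).
  have -> : N = r + ((s - r) + (N - s)) by lia.
  by apply: is_comp_cat => //; exact: is_comp_cat.
rewrite compsP Hc eventL_cat // catA eventR_cat -?catA //.
by rewrite sumn_cat Hsl; case/andP: Hm => _ /eqP ->; lia.
Qed.

End Comb.

Lemma key_ineq (R : realType) (A B U1 U2 U3 UN S M m c : R) :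
  0 <= A -> 0 <= B -> 0 < UN -> 0 < m -> m <= U2 -> m <= U3 ->
  0 <= U1 <= M -> 0 <= UN <= M -> U2 <= M -> U3 <= M ->
  `|U1 - c| <= S -> `|U2 - c| <= S -> `|U3 - c| <= S -> `|UN - c| <= S ->
  `| A * B * U1 / UN - (A * U2 / UN) * (B * U3 / UN) |
    <= (4 * M / m ^+ 2) * (A * U2 / UN) * (B * U3 / UN) * S.
Proof.
move=> HA HB HN Hm H2 H3 /andP [H10 H1M] /andP [HN0 HNM] H2M H3M h1 h2 h3 hN.
have E1 : A * B * U1 / UN - (A * U2 / UN) * (B * U3 / UN)
        = (A * B / UN ^+ 2) * (U1 * UN - U2 * U3).
  by field; rewrite gt_eqF.
have E2 : (4 * M / m ^+ 2) * (A * U2 / UN) * (B * U3 / UN) * S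
        = (A * B / UN ^+ 2) * ((4 * M / m ^+ 2) * U2 * U3 * S).
  by field; rewrite !gt_eqF.
rewrite E1 E2 normrM (ger0_norm (x := A * B / UN ^+ 2)); last first.
  by apply: divr_ge0; [apply: mulr_ge0|apply: exprn_ge0; apply: ltW].
apply: ler_wpM2l; first by apply: divr_ge0; [apply: mulr_ge0|apply: exprn_ge0; apply: ltW].
have HS : 0 <= S by apply: le_trans h1.
have D1 : `|U1 - U2| <= 2 * S.
  rewrite (_ : U1 - U2 = (U1 - c) - (U2 - c)); last by ring.
  by apply: (le_trans (ler_normB _ _)); lra.
have D2 : `|UN - U3| <= 2 * S.
  rewrite (_ : UN - U3 = (UN - c) - (U3 - c)); last by ring.
  by apply: (le_trans (ler_normB _ _)); lra.
have -> : U1 * UN - U2 * U3 = (U1 - U2) * UN + U2 * (UN - U3) by ring.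
have HM : 0 <= M by apply: le_trans HN0 HNM.
have H2p : 0 <= U2 by exact: le_trans (ltW Hm) H2.
have L1 : `|(U1 - U2) * UN + U2 * (UN - U3)| <= 4 * M * S.
  apply: (le_trans (ler_normD _ _)); rewrite !normrM (ger0_norm HN0) (ger0_norm H2p).
  have : `|U1 - U2| * UN <= 2 * S * M by apply: ler_pM => //.
  have : U2 * `|UN - U3| <= M * (2 * S).
    by apply: ler_pM.
  lra.
apply: (le_trans L1).
have Hmm : m ^+ 2 <= U2 * U3.
  by rewrite expr2; apply: ler_pM => //; rewrite ltW.
have -> : 4 * M / m ^+ 2 * U2 * U3 * S = (4 * M * S) * ((U2 * U3) / m ^+ 2) by field; rewrite gt_eqF.
rewrite -{1}(mulr1 (4 * M * S)); apply: ler_wpM2l; first by rewrite !mulr_ge0.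
by rewrite ler_pdivlMr ?mul1r // exprn_gt0.
Qed.

Lemma sum_reindex (R : realType) (F : seq nat -> R) (E : pred (seq nat)) N K
  (f : seq nat -> seq nat) : injective f ->
  (forall ns, (ns \in comps N) && E ns = (ns \in map f (comps K))) ->
  \sum_(ns <- comps N | E ns) F ns = \sum_(m <- comps K) F (f m).
Proof.
move=> Hf HE; rewrite -big_filter -(big_map f xpredT F).
apply: perm_big; apply: uniq_perm.
- exact: filter_uniq (comps_uniq N).
- by rewrite map_inj_uniq // comps_uniq.
by move=> ns; rewrite mem_filter andbC HE.
Qed.

Section PNcomp.
Variables (R : realType) (p : nat) (gam : R).
Hypothesis p0 : (0 < p)%N.
Hypothesis hU : forall N, uu p gam N = \sum_(ns <- comps N) \prod_(n <- ns) pp p gam n.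

Let P (s : seq nat) := \prod_(n <- s) pp p gam n.

Lemma PN_L N r lc : (r <= N)%N -> is_comp r lc ->
  PN p gam N (eventL p N r lc) = P lc * uu p gam (N - r) / uu p gam N.
Proof.
move=> HrN Hlc; rewrite /PN -mulr_suml.
rewrite (@sum_reindex R (fun ns => \prod_(n <- ns) pp p gam n) _ N (N - r) (cat lc)).
- by rewrite (hU (N - r)) big_distrr /=; congr (_ * _); apply: eq_bigr => x _; rewrite big_cat.
- exact: catlI.
by move=> ns; rewrite memL.
Qed.

Lemma PN_R N s rc : (s <= N)%N -> is_comp (N - s) rc ->
  PN p gam N (eventR p N s rc) = P rc * uu p gam s / uu p gam N.
Proof.
move=> HsN Hrc; rewrite /PN -mulr_suml.
rewrite (@sum_reindex R (fun ns => \prod_(n <- ns) pp p gam n) _ N s (cat^~ rc)).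
- rewrite (hU s) big_distrr /=; congr (_ * _); apply: eq_bigr => x _.
  by rewrite big_cat mulrC.
- by move=> x y; apply: catrI'.
by move=> ns; rewrite memR.
Qed.

Lemma PN_LR N r s lc rc : (r <= s)%N -> (s <= N)%N -> is_comp r lc -> is_comp (N - s) rc ->
  PN p gam N (fun ns => eventL p N r lc ns && eventR p N s rc ns)
  = P lc * P rc * uu p gam (s - r) / uu p gam N.
Proof.
move=> Hrs HsN Hlc Hrc; rewrite /PN -mulr_suml.
rewrite (@sum_reindex R (fun ns => \prod_(n <- ns) pp p gam n) _ N (s - r)
  (fun m => lc ++ (m ++ rc))).
- rewrite (hU (s - r)) big_distrr /=; congr (_ * _); apply: eq_bigr => x _.
  rewrite !big_cat /=; rewrite /P; ring.
- by move=> x y /catlI /catrI'.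
by move=> ns; rewrite memLR.
Qed.

End PNcomp.

Theorem lemma5p8 (R : realType) (p : nat) (Rad ell : R) :
  (0 < p)%N -> 0 < Rad -> 0 < ell ->
  let gam := ell / Rad in
  (* r = exp(-lim (1/N) ln C_N) : the limit exists *)
  cvgn (fun N : nat => (N%:R)^-1 * ln (CN p gam N)) ->
  (* known facts *)
  (forall N, uu p gam N = \sum_(ns <- comps N) \prod_(n <- ns) pp p gam n) ->
  (fun M : nat => \sum_(1 <= n < M) pp p gam n) @ \oo --> (1 : R) ->
  cvgn (fun M : nat => \sum_(1 <= n < M) n%:R * pp p gam n) ->
  uu p gam @ \oo --> (mu p gam)^-1 ->
  exists K : R, forall (d r s N : nat) (lc rc : seq nat),
    (r <= s <= N)%N -> (d <= s - r)%N ->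
    is_comp r lc -> is_comp (N - s) rc ->
    `| PN p gam N (fun ns => eventL p N r lc ns && eventR p N s rc ns)
       - PN p gam N (eventL p N r lc) * PN p gam N (eventR p N s rc) |
    <= K * PN p gam N (eventL p N r lc) * PN p gam N (eventR p N s rc)
         * sup [set `| uu p gam k - (mu p gam)^-1 | | k in [set k : nat | (d <= k)%N]].
Proof.
move=> p0 Rad0 ell0 gam Hcv hU Hsum Hmu Hu.
have pge := @pp_ge0 R p gam.
have p1 := @pp1_gt0 R p gam.
have u_ge0 k : 0 <= uu p gam k.
  by rewrite hU; apply: sumr_ge0 => ns _; apply: prodr_ge0 => n _.
have u_ge k : pp p gam 1 ^+ k <= uu p gam k.
  rewrite hU (big_rem (nseq k 1%N)); last first.
    by rewrite compsP /is_comp all_nseq /= sumn_nseq mul1n eqxx orbT.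
  rewrite /= big_nseq iter_mulr_1 lerDl.
  by apply: sumr_ge0 => ns _; apply: prodr_ge0 => n _.
have mu_ge : pp p gam 1 <= mu p gam.
  rewrite /mu; apply: limr_ge => //.
  apply: filterS (nbhs_infty_ge 2) => M HM.
  rewrite big_ltn //= mul1r lerDl.
  by apply: sumr_ge0 => n _; apply: mulr_ge0.
have c0 : 0 < (mu p gam)^-1 by rewrite invr_gt0; exact: lt_le_trans mu_ge.
set c := (mu p gam)^-1 in Hu c0 *.
have [N0 HN0] : exists N0, forall k, (N0 <= k)%N -> `|c - uu p gam k| < c / 2.
  move/cvgrPdist_lt: Hu => /(_ (c / 2)) H.
  have := H (ltac:(by rewrite divr_gt0)).
  move=> [N0 _ HN]; exists N0 => k Hk; exact: HN.
set q := Num.min (pp p gam 1) 1.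
have q0 : 0 < q by rewrite lt_min p1 ltr01.
have q1 : q <= 1 by rewrite ge_min lexx orbT.
have qp : q <= pp p gam 1 by rewrite ge_min lexx.
set m0 := Num.min (c / 2) (q ^+ N0).
have m00 : 0 < m0 by rewrite lt_min divr_gt0 //= exprn_gt0.
have hm k : m0 <= uu p gam k.
  case: (leqP N0 k) => Hk.
    have := HN0 k Hk; rewrite ltr_norml => /andP [_ H2].
    have : m0 <= c / 2 by rewrite ge_min lexx.
    lra.
  apply: (le_trans (y := q ^+ k)).
    rewrite ge_min; apply/orP; right; apply: ler_wiXn2l => //; first exact: ltW.
    exact: ltnW.
  apply: le_trans (u_ge k).
  by apply: lerXn2r => //; rewrite nnegrE ltW.
set M0 := c + c / 2 + \sum_(i < N0) uu p gam i.
have hM k : uu p gam k <= M0.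
  have Hs : 0 <= \sum_(i < N0) uu p gam i by apply: sumr_ge0.
  case: (leqP N0 k) => Hk.
    have := HN0 k Hk; rewrite ltr_norml => /andP [H1 _].
    rewrite /M0; lra.
  rewrite /M0 (bigD1 (Ordinal Hk)) //=.
  have : 0 <= \sum_(i < N0 | i != Ordinal Hk) uu p gam i by apply: sumr_ge0.
  lra.
exists (4 * M0 / m0 ^+ 2) => d r s N lc rc /andP [Hrs HsN] Hd Hlc Hrc.
have HrN : (r <= N)%N by apply: leq_trans Hrs HsN.
rewrite (@PN_LR R p gam p0 hU N r s lc rc Hrs HsN Hlc Hrc) (@PN_L R p gam p0 hU N r lc HrN Hlc) (@PN_R R p gam p0 hU N s rc HsN Hrc).
set S := sup _.
have hS k : (d <= k)%N -> `|uu p gam k - c| <= S.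
  move=> Hk; apply: ub_le_sup; last by exists k.
  exists (M0 + c) => y [k' _ <-].
  apply: (le_trans (ler_normB _ _)).
  rewrite (ger0_norm (u_ge0 k')) (ger0_norm (ltW c0)).
  by rewrite lerD2r hM.
apply: key_ineq.
- by apply: prodr_ge0 => n _.
- by apply: prodr_ge0 => n _.
- exact: lt_le_trans m00 (hm N).
- exact: m00.
- exact: hm.
- exact: hm.
- by rewrite u_ge0 hM.
- by rewrite u_ge0 hM.
- exact: hM.
- exact: hM.
- by apply: hS.
- by apply: hS; lia.
- by apply: hS; lia.
- by apply: hS; lia.
Qed.
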